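(* Let $\mathcal{A}$ and $\mathcal{U}$ be Banach algebras, $\theta$ a nonzero character on $\mathcal{A}$, and $T:\mathcal{A}\times_{\theta}\mathcal{U}\to\mathcal{A}\times_{\theta}\mathcal{U}$ a multiplier, written as $T((a,u))=(R_1(a)+S_1(u),\ R_2(a)+S_2(u))$ with linear maps $R_1:\mathcal{A}\to\mathcal{A}$, $R_2:\mathcal{A}\to\mathcal{U}$, $S_1:\mathcal{U}\to\mathcal{A}$, $S_2:\mathcal{U}\to\mathcal{U}$. Then: (i) $R_2$ and $S_2$ are continuous; (ii) $\mathfrak{S}(R_1)\subseteq\ker\theta$ and $\mathfrak{S}(S_1)\subseteq\ker\theta$.
   Context: The Lau product $\mathcal{A}\times_{\theta}\mathcal{U}$ is $\mathcal{A}\times\mathcal{U}$ with norm $\|(a,u)\|=\|a\|+\|u\|$ and product $(a,u)(a',u')=(aa',\theta(a)u'+\theta(a')u+uu')$. A multiplier on a Banach algebra $\mathcal{B}$ is a linear map $T$ with $xT(y)=T(x)y$ for all $x,y\in\mathcal{B}$. For a linear map $L:\mathcal{E}\to\mathcal{F}$ between Banach spaces, $\mathfrak{S}(L)=\{y\in\mathcal{F}:\exists (x_n)\subseteq\mathcal{E},\ x_n\to0,\ L(x_n)\to y\}$. *)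

(* Defs.v *)
From HB Require Import structures.
From mathcomp Require Import all_boot all_order all_algebra.
From mathcomp Require Import all_classical all_reals all_analysis.
From mathcomp Require Import complex.
Set Implicit Arguments. Unset Strict Implicit. Unset Printing Implicit Defensive.
Import Order.TTheory GRing.Theory Num.Theory.
Import numFieldNormedType.Exports.
Local Open Scope classical_set_scope.
Local Open Scope ring_scope.

(** A Banach algebra over the field K: a complete normed K-vector space A
    together with a multiplication [mul] which is associative, K-bilinear
    and submultiplicative for the norm (no unit is assumed). *)
Record banach_algebra (K : numFieldType) (A : completeNormedModType K)
    (mul : A -> A -> A) : Prop := BanachAlgebra {
  ba_mulA : forall x y z : A, mul x (mul y z) = mul (mul x y) z;
  ba_mulDl : forall x y z : A, mul (x + y) z = mul x z + mul y z;
  ba_mulDr : forall x y z : A, mul x (y + z) = mul x y + mul x z;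
  ba_mulZl : forall (k : K) (x y : A), mul (k *: x) y = k *: mul x y;
  ba_mulZr : forall (k : K) (x y : A), mul x (k *: y) = k *: mul x y;
  ba_normM : forall x y : A, `|mul x y| <= `|x| * `|y|
}.

Definition character (K : numFieldType) (A : lmodType K)
    (mul : A -> A -> A) (theta : A -> K) : Prop :=
  linear theta /\
  (forall x y : A, theta (mul x y) = theta x * theta y) /\
  (exists x : A, theta x != 0).

(** The product of the Lau product A x_theta U on the carrier A * U:
    (a,u)(a',u') = (aa', theta(a)u' + theta(a')u + uu'). *)
Definition lau_mul (K : numFieldType) (A : Type) (U : lmodType K)
    (mulA : A -> A -> A) (mulU : U -> U -> U) (theta : A -> K)
    (x y : A * U) : A * U :=
  (mulA x.1 y.1, theta x.1 *: y.2 + theta y.1 *: x.2 + mulU x.2 y.2).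

Definition multiplier (B : Type) (mul : B -> B -> B) (T : B -> B) : Prop :=
  forall x y : B, mul x (T y) = mul (T x) y.

Definition separating_space (K : numFieldType) (E F : normedModType K)
    (L : E -> F) : set F :=
  [set y | exists x : nat -> E, x @ \oo --> (0 : E) /\ (L \o x) @ \oo --> y].

(* Main.v *)
Require Import Defs.
From HB Require Import structures.
From mathcomp Require Import all_boot all_order all_algebra.
From mathcomp Require Import all_classical all_reals all_analysis.
From mathcomp Require Import complex.
Import Order.TTheory GRing.Theory Num.Theory.
Import numFieldNormedType.Exports.
Local Open Scope classical_set_scope.
Local Open Scope ring_scope.


Lemma lip_cont (K : numFieldType) (V W : normedModType K) (f : V -> W) (k : K) :
  0 <= k -> (forall x y, `|f x - f y| <= k * `|x - y|) -> continuous f.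
Proof.
move=> k0 hf x; apply/cvgrPdist_lt => e e0.
have k1 : 0 < k + 1 by rewrite ltr_wpDl.
have H : \forall t \near x, `|x - t| < e / (k + 1).
  by apply: (@cvgrPdist_lt _ _ _ _ _ (fun t => t) x).1; [exact: cvg_id| exact: divr_gt0].
apply: (filterS _ H) => t /= ht.
apply: (le_lt_trans (hf x t)).
apply: (@le_lt_trans _ _ ((k + 1) * `|x - t|)).
  by rewrite ler_wpM2r // lerDl.
by rewrite mulrC -ltr_pdivlMr.
Qed.

Lemma geoR (R : realType) (q e : R) : 0 <= q -> q < 1 -> 0 < e -> exists N, q ^+ N < e.
Proof.
move=> q0 q1 e0.
have q1' : `|q| < 1 by rewrite ger0_norm.
have [N _ HN] := (cvgrPdist_lt _ _).1 (@cvg_geometric R 1 q q1') e e0.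
exists N; have := HN N (leqnn N); rewrite /geometric /= mul1r sub0r normrN.
by rewrite ger0_norm // exprn_ge0.
Qed.

Section GeoC.
Local Open Scope complex_scope.
Lemma geoC (R : realType) (q e : R[i]) : 0 <= q -> q < 1 -> 0 < e -> exists N, q ^+ N < e.
Proof.
move=> q0 q1 e0.
have qr : q = (complex.Re q)%:C by rewrite RRe_real // ger0_real.
have er : e = (complex.Re e)%:C by rewrite RRe_real // gtr0_real.
rewrite qr er in q0 q1 e0 *.
rewrite ler0c in q0; rewrite -[1]/((1:R)%:C) ltcR in q1.
rewrite -[0]/((0:R)%:C) ltcR in e0.
have [N HN] := @geoR _ _ _ q0 q1 e0; exists N.
by rewrite -rmorphXn ltcR.
Qed.

End GeoC.


Lemma fixpt (R : realType) (A : completeNormedModType R[i]) (f : A -> A) (q : R[i]) :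
  0 <= q -> q < 1 -> (forall x y, `|f x - f y| <= q * `|x - y|) -> exists b, b = f b.
Proof.
move=> q0 q1 hf.
pose s n := iter n f 0.
have hit n x y : `|iter n f x - iter n f y| <= q ^+ n * `|x - y|.
  elim: n => [|n ih]; first by rewrite expr0 mul1r.
  rewrite !iterS (le_trans (hf _ _)) // exprS -mulrA ler_wpM2l //.
have q10 : 1 - q != 0 by rewrite subr_eq0 eq_sym lt_eqF.
pose d0 := `|s 1%N - s 0%N|.
pose M := d0 / (1 - q).
have M0 : 0 <= M.
  by apply: divr_ge0; [exact: normr_ge0| rewrite subr_ge0 ltW].
have hB m : `|s m - s 0%N| <= M.
  elim: m => [|m ih]; first by rewrite subrr normr0.
  have -> : M = q * M + d0.
    have -> : d0 = (1 - q) * M by rewrite /M mulrC divfK.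
    by rewrite mulrBl mul1r addrC subrK.
  apply: (le_trans (ler_distD (s 1%N) _ _)).
  rewrite lerD2r /s iterS.
  apply: (le_trans (hf _ _)); exact: ler_wpM2l.
have hC n m : `|s (n + m)%N - s n| <= q ^+ n * M.
  rewrite /s iterD -[in X in `|_ - X|](addn0 n) iterD.
  apply: (le_trans (hit _ _ _)); apply: ler_wpM2l; [exact: exprn_ge0| exact: hB].
have cs : cvgn s.
  apply/cauchy_cvgP; apply/cauchy_ballP => e e0; near_simpl.
  have M1 : 0 < M + 1 by rewrite ltr_wpDl.
  have [N hN] := @geoC _ _ _ q0 q1 (divr_gt0 e0 M1).
  exists ([set n | N <= n], [set n | N <= n])%N; first by split; exists N.
  have key n m : (N <= n)%N -> (n <= m)%N -> `|s n - s m| < e.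
    move=> Nn nm; rewrite distrC -(subnKC nm).
    apply: (le_lt_trans (hC _ _)).
    apply: (@le_lt_trans _ _ (q ^+ N * (M + 1))).
      apply: (@le_trans _ _ (q ^+ N * M)).
        by apply: ler_wpM2r => //; apply: ler_wiXn2l => //; exact: ltW.
      by apply: ler_wpM2l; [exact: exprn_ge0| rewrite lerDl].
    by rewrite -ltr_pdivlMr.
  move=> [n m] [/= Nn Nm]; rewrite -ball_normE /=.
  case: (leqP n m) => nm; first exact: key.
  by rewrite distrC; apply: key => //; exact: ltnW.
pose b := limn s.
have hs : s @ \oo --> b := cs.
have fc : continuous f := @lip_cont _ _ _ _ _ q0 hf.
have h1 : f @ (s @ \oo) --> f b := cvg_trans (cvg_app f hs) (fc b).
have h2 : (fun n => s n.+1) @ \oo --> b by rewrite cvg_shiftS.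
exists b; apply: (cvg_unique _ h2 h1).
exact: norm_hausdorff.
Qed.


Section BA.
Variables (K : numFieldType) (A : completeNormedModType K) (mul : A -> A -> A).
Hypothesis hA : banach_algebra mul.

Lemma bmulx0 x : mul x 0 = 0.
Proof. by have := ba_mulZr hA 0 x 0; rewrite !scale0r. Qed.
Lemma bmul0x x : mul 0 x = 0.
Proof. by have := ba_mulZl hA 0 0 x; rewrite !scale0r. Qed.
Lemma bmulBr x y z : mul x (y - z) = mul x y - mul x z.
Proof. by rewrite (ba_mulDr hA) -scaleN1r (ba_mulZr hA) scaleN1r. Qed.
End BA.

Section Char.
Variables (R : realType) (A : completeNormedModType R[i]) (mul : A -> A -> A).
Hypothesis hA : banach_algebra mul.
Variable theta : A -> R[i].
Hypothesis ht : character mul theta.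

Lemma thD u v : theta (u + v) = theta u + theta v.
Proof. by have := ht.1 1 u v; rewrite scale1r => ->; rewrite scale1r. Qed.
Lemma th0 : theta 0 = 0.
Proof.
have h := thD 0 0; rewrite addr0 in h.
by apply: (@addrI _ (theta 0)); rewrite addr0 -h.
Qed.
Lemma thZ k u : theta (k *: u) = k * theta u.
Proof. by have := ht.1 k u 0; rewrite !addr0 th0 addr0. Qed.
Lemma thB u v : theta (u - v) = theta u - theta v.
Proof. by rewrite thD -scaleN1r thZ mulN1r. Qed.

Lemma th_bound x : `|theta x| <= `|x|.
Proof.
apply: contrapT => /negP H.
have lt : `|x| < `|theta x| by rewrite real_ltNge ?normr_real.
have tx0 : theta x != 0.
  apply/eqP => e; move: lt; rewrite e normr0 => /(le_lt_trans (normr_ge0 _)).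
  by rewrite ltxx.
pose a := (theta x)^-1 *: x.
have ta : theta a = 1 by rewrite thZ mulVf.
have na : `|a| < 1.
  by rewrite /a normrZ normfV ltr_pdivrMl ?normr_gt0 // mulr1.
pose f z := a + mul a z.
have hf z w : `|f z - f w| <= `|a| * `|z - w|.
  by rewrite /f opprD addrACA subrr add0r -bmulBr // (ba_normM hA).
have [b hb] := @fixpt R A f `|a| (normr_ge0 _) na hf.
have h' : theta b = 1 + theta b.
  by rewrite {1}hb /f thD ht.2.1 ta mul1r.
have : (1 : R[i]) = 0.
  by apply: (@addIr _ (theta b)); rewrite add0r -h'.
by move/eqP; rewrite oner_eq0.
Qed.

Lemma th_cont : continuous (theta : A -> R[i]^o).
Proof.
apply: (@lip_cont _ _ (R[i]^o) _ 1 ler01) => x y.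
by rewrite -thB mul1r th_bound.
Qed.
End Char.


Theorem theorem3p2 (R : realType)
  (A U : completeNormedModType R[i])
  (mulA : A -> A -> A) (mulU : U -> U -> U)
  (hA : banach_algebra mulA) (hU : banach_algebra mulU)
  (theta : A -> R[i]) (htheta : character mulA theta)
  (R1 : {linear A -> A}) (R2 : {linear A -> U})
  (S1 : {linear U -> A}) (S2 : {linear U -> U})
  (hT : multiplier (lau_mul mulA mulU theta)
          (fun x : A * U => (R1 x.1 + S1 x.2, R2 x.1 + S2 x.2))) :
  (continuous R2 /\ continuous S2) /\
  (separating_space R1 `<=` [set a : A | theta a = 0] /\
   separating_space S1 `<=` [set a : A | theta a = 0]).
Proof.
have thM := htheta.2.1.
have [a0 ha0] : exists a0, theta a0 = 1.
  have [x0 hx0] := htheta.2.2.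
  by exists ((theta x0)^-1 *: x0); rewrite (@thZ _ _ _ _ htheta) mulVf.
pose c := R2 a0.
pose lam := theta (R1 a0).
have hR2 b : R2 b = theta b *: c.
  have := congr1 snd (hT (a0, 0) (b, 0)); rewrite /lau_mul /=.
  by rewrite !linear0 !addr0 (@bmul0x _ _ _ hU) (@bmulx0 _ _ _ hU) ha0 scale1r !addr0 add0r.
have hS2 v : S2 v = lam *: v + mulU c v.
  have := congr1 snd (hT (a0, 0) (0, v)); rewrite /lau_mul /=.
  by rewrite !linear0 !addr0 !add0r (@bmul0x _ _ _ hU) (@th0 _ _ _ _ htheta) scale0r ha0 scale1r !addr0.
have hthR1 b : theta (R1 b) = lam * theta b.
  have := congr1 (theta \o fst) (hT (a0, 0) (b, 0)); rewrite /lau_mul /=.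
  by rewrite !linear0 !addr0 !thM ha0 mul1r.
have hthS1 v : theta (S1 v) = 0.
  have := congr1 (theta \o fst) (hT (a0, 0) (0, v)); rewrite /lau_mul /=.
  by rewrite !linear0 !addr0 add0r (@bmulx0 _ _ _ hA) thM ha0 mul1r (@th0 _ _ _ _ htheta).
have thc := @th_cont _ _ _ hA _ htheta.
split; [split|split].
- apply: (@lip_cont _ _ _ _ `|c| (normr_ge0 _)) => x y.
  rewrite !hR2 -scalerBl normrZ mulrC ler_wpM2l //.
  by rewrite -(@thB _ _ _ _ htheta) (@th_bound _ _ _ hA _ htheta).
- apply: (@lip_cont _ _ _ _ (`|lam| + `|c|) (addr_ge0 (normr_ge0 _) (normr_ge0 _))) => x y.
  rewrite !hS2 opprD addrACA -scalerBr -(@bmulBr _ _ _ hU) mulrDl.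
  apply: (le_trans (ler_normD _ _)); apply: lerD.
    by rewrite normrZ.
  exact: (ba_normM hU).
- move=> y [x [hx hy]] /=.
  have h1 : (fun n => (theta (R1 (x n)) : R[i]^o)) @ \oo --> (theta y : R[i]^o).
    exact: (cvg_trans (cvg_app _ hy) (thc y)).
  pose g := fun z : A => (lam * theta z : R[i]^o).
  have gc : continuous g.
    apply: (@lip_cont _ _ (R[i]^o) _ `|lam| (normr_ge0 _)) => z w.
    rewrite /g -mulrBr normrM ler_wpM2l // -(@thB _ _ _ _ htheta).
    exact: (@th_bound _ _ _ hA _ htheta).
  have h2 : (fun n => (theta (R1 (x n)) : R[i]^o)) @ \oo --> g 0.
    have -> : (fun n => (theta (R1 (x n)) : R[i]^o)) = g \o x.
      by apply: funext => n; rewrite /= hthR1.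
    exact: (cvg_trans (cvg_app _ hx) (gc 0)).
  have := cvg_unique _ h1 h2; rewrite /g (@th0 _ _ _ _ htheta) mulr0; apply.
  exact: norm_hausdorff.
- move=> y [x [hx hy]] /=.
  have h1 : (fun n => (theta (S1 (x n)) : R[i]^o)) @ \oo --> (theta y : R[i]^o).
    exact: (cvg_trans (cvg_app _ hy) (thc y)).
  have h2 : (fun n => (theta (S1 (x n)) : R[i]^o)) @ \oo --> (0 : R[i]^o).
    have -> : (fun n => (theta (S1 (x n)) : R[i]^o)) = fun _ => 0.
      by apply: funext => n; rewrite hthS1.
    exact: cvg_cst.
  have := cvg_unique _ h1 h2; apply.
  exact: norm_hausdorff.
Qed.
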